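(* Let $e$ be a curve and $\delta>0$. Then each of the offsets $e_{-\delta}$ and $e_{+\delta}$ is monotone, i.e. meets every vertical line and every horizontal line in a connected set.
   Context: A curve is an open, bounded, piecewise-algebraic arc in $\mathbb{R}^2$ that is both $x$-monotone and $y$-monotone. For a point $a$ and a set $s$, $a<_y s$ means that $a$ and $s$ overlap in $x$ (some $q\in s$ has $q_x=a_x$) and $a_y<q_y$ for every $q\in s$ with $q_x=a_x$; $a>_y s$ is defined symmetrically. ${\rm dist}(a,e)=\inf_{q\in e}|a-q|$. The $\delta$-offsets of $e$ are $e_{-\delta}=\{a: a<_y e,\ {\rm dist}(a,e)=\delta\}$ and $e_{+\delta}=\{a: a>_y e,\ {\rm dist}(a,e)=\delta\}$. *)

(* Defs.v *)
From Stdlib Require Import Reals Lra List.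
Open Scope R_scope.

Definition pt := (R * R)%type.
Definition pset := pt -> Prop.

Definition edist (a q : pt) : R :=
  sqrt ((fst a - fst q)^2 + (snd a - snd q)^2).

(* Bivariate real polynomials: list of monomials (c, i, j) meaning c x^i y^j *)
Definition poly2 := list (R * nat * nat).
Definition peval (p : poly2) (a : pt) : R :=
  fold_right (fun m acc => let '(c, i, j) := m in c * fst a ^ i * snd a ^ j + acc) 0 p.
Definition poly2_nonzero (p : poly2) : Prop := exists a : pt, peval p a <> 0.

Definition cont_at (g : R -> pt) (t : R) : Prop :=
  continuity_pt (fun s => fst (g s)) t /\ continuity_pt (fun s => snd (g s)) t.

Definition open_arc_param (e : pset) (g : R -> pt) : Prop :=
  (forall t, 0 < t < 1 -> cont_at g t) /\
  (forall s t, 0 < s < 1 -> 0 < t < 1 -> g s = g t -> s = t) /\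
  (forall a, e a <-> exists t, 0 < t < 1 /\ g t = a).

Definition bounded (e : pset) : Prop :=
  exists M, forall a, e a -> Rabs (fst a) <= M /\ Rabs (snd a) <= M.

Definition piecewise_algebraic (g : R -> pt) : Prop :=
  exists (n : nat) (t : nat -> R) (P : nat -> poly2),
    t 0%nat = 0 /\ t n = 1 /\
    (forall i, (i < n)%nat -> t i < t (S i)) /\
    (forall i, (i < n)%nat -> poly2_nonzero (P i)) /\
    (forall i s, (i < n)%nat -> t i <= s <= t (S i) -> 0 < s < 1 ->
                 peval (P i) (g s) = 0).

Definition x_monotone (e : pset) : Prop :=
  forall a b, e a -> e b -> fst a = fst b -> a = b.
Definition y_monotone (e : pset) : Prop :=
  forall a b, e a -> e b -> snd a = snd b -> a = b.

Definition is_curve (e : pset) : Prop :=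
  (exists g, open_arc_param e g /\ piecewise_algebraic g) /\
  bounded e /\ x_monotone e /\ y_monotone e.

Definition below (a : pt) (s : pset) : Prop :=
  (exists q, s q /\ fst q = fst a) /\
  (forall q, s q -> fst q = fst a -> snd a < snd q).
Definition above (a : pt) (s : pset) : Prop :=
  (exists q, s q /\ fst q = fst a) /\
  (forall q, s q -> fst q = fst a -> snd q < snd a).

Definition dist_is (a : pt) (e : pset) (d : R) : Prop :=
  (forall q, e q -> d <= edist a q) /\
  (forall d', (forall q, e q -> d' <= edist a q) -> d' <= d).

Definition offset_minus (e : pset) (delta : R) : pset :=
  fun a => below a e /\ dist_is a e delta.
Definition offset_plus (e : pset) (delta : R) : pset :=
  fun a => above a e /\ dist_is a e delta.

(* A subset of R is connected iff it is an interval (order-convex) *)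
Definition interval_set (P : R -> Prop) : Prop :=
  forall u v w, P u -> P w -> u <= v <= w -> P v.

Definition monotone_set (S : pset) : Prop :=
  (forall c, interval_set (fun y => S (c, y))) /\
  (forall c, interval_set (fun x => S (x, c))).

(* Main.v *)
Require Import Defs.
From Stdlib Require Import Reals.
Open Scope R_scope.
From Stdlib Require Import Reals Lra Classical Ranalysis5.
Open Scope R_scope.

Definition btw (a b c : R) := (a < b < c) \/ (c < b < a).

Lemma ivt_up (f : R -> R) a b L : a < b ->
  (forall t, a <= t <= b -> continuity_pt f t) -> f a < L < f b ->
  exists t, a <= t <= b /\ f t = L.
Proof.
  intros Hab Hc HL.
  destruct (IVT_interv (fun t => f t - L) a b) as [t [Ht Hf]].
  - intros t Ht. apply (continuity_pt_minus f (fun _ => L)). auto.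
    apply continuity_pt_const. intros ? ?; reflexivity.
  - lra.
  - lra.
  - lra.
  - exists t; split; auto; lra.
Qed.

Lemma ivt_gen (f : R -> R) a b L : a < b ->
  (forall t, a <= t <= b -> continuity_pt f t) -> (f a < L < f b \/ f b < L < f a) ->
  exists t, a <= t <= b /\ f t = L.
Proof.
  intros Hab Hc [HL|HL].
  - apply ivt_up; auto.
  - destruct (ivt_up (fun t => - f t) a b (- L)) as [t [Ht Hf]]; auto.
    + intros t Ht. apply (continuity_pt_opp f). auto.
    + lra.
    + exists t; split; auto; lra.
Qed.

Definition cinj (f : R -> R) :=
  (forall t, 0 < t < 1 -> continuity_pt f t) /\
  (forall s t, 0 < s < 1 -> 0 < t < 1 -> f s = f t -> s = t).

Lemma peak f a b c : cinj f -> 0 < a -> a < b -> b < c -> c < 1 ->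
  f a < f b -> f c < f b -> False.
Proof.
  intros [Hc Hi] H0 Hab Hbc Hc1 H1 H2.
  set (L := (f b + Rmax (f a) (f c)) / 2).
  assert (f a <= Rmax (f a) (f c)) by apply Rmax_l.
  assert (f c <= Rmax (f a) (f c)) by apply Rmax_r.
  assert (Rmax (f a) (f c) < f b) by (apply Rmax_lub_lt; auto).
  destruct (ivt_gen f a b L) as [t1 [Ht1 Hf1]]; auto.
  { intros; apply Hc; lra. } { unfold L; lra. }
  destruct (ivt_gen f b c L) as [t2 [Ht2 Hf2]]; auto.
  { intros; apply Hc; lra. } { unfold L; lra. }
  assert (t1 = t2) by (apply Hi; lra).
  assert (t1 = b) by lra. subst. unfold L in Hf1. lra.
Qed.

Lemma cinj_opp f : cinj f -> cinj (fun t => - f t).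
Proof.
  intros [Hc Hi]; split.
  - intros t Ht. apply (continuity_pt_opp f). auto.
  - intros s t Hs Ht E. apply Hi; auto; lra.
Qed.

Lemma inj_btw f a b c : cinj f -> 0 < a -> a < b -> b < c -> c < 1 ->
  btw (f a) (f b) (f c).
Proof.
  intros Hf H0 Hab Hbc Hc1.
  pose proof Hf as [_ Hi].
  assert (f a <> f b) by (intro E; apply Hi in E; lra).
  assert (f c <> f b) by (intro E; apply Hi in E; lra).
  unfold btw.
  destruct (Rlt_or_le (f a) (f b)); destruct (Rlt_or_le (f c) (f b)).
  - exfalso; eapply (peak f a b c); eauto.
  - left; lra.
  - right; lra.
  - exfalso; apply (peak (fun t => - f t) a b c); auto. apply cinj_opp; auto.
    all: lra.
Qed.

Lemma btw_param f a b c : cinj f -> 0 < a < 1 -> 0 < b < 1 -> 0 < c < 1 ->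
  btw (f a) (f b) (f c) -> btw a b c.
Proof.
  intros Hf Ha Hb Hc Hbt.
  assert (a <> b) by (intro; subst; unfold btw in *; lra).
  assert (c <> b) by (intro; subst; unfold btw in *; lra).
  assert (a <> c).
  { intro; subst. unfold btw in *; lra. }
  unfold btw in *.
  destruct (Rtotal_order a b) as [E1|[E1|E1]]; try congruence;
  destruct (Rtotal_order b c) as [E2|[E2|E2]]; try congruence;
  destruct (Rtotal_order a c) as [E3|[E3|E3]]; try congruence; try lra.
  - pose proof (inj_btw f a c b Hf ltac:(lra) ltac:(lra) ltac:(lra) ltac:(lra)); unfold btw in *; lra.
  - pose proof (inj_btw f c a b Hf ltac:(lra) ltac:(lra) ltac:(lra) ltac:(lra)); unfold btw in *; lra.
  - pose proof (inj_btw f b a c Hf ltac:(lra) ltac:(lra) ltac:(lra) ltac:(lra)); unfold btw in *; lra.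
  - pose proof (inj_btw f b c a Hf ltac:(lra) ltac:(lra) ltac:(lra) ltac:(lra)); unfold btw in *; lra.
Qed.

Lemma btw_vals f a b c : cinj f -> 0 < a < 1 -> 0 < b < 1 -> 0 < c < 1 ->
  btw a b c -> btw (f a) (f b) (f c).
Proof.
  intros Hf Ha Hb Hc [H|H].
  - apply inj_btw; auto; lra.
  - pose proof (inj_btw f c b a Hf ltac:(lra) ltac:(lra) ltac:(lra) ltac:(lra)); unfold btw in *; lra.
Qed.
Definition good (e : pset) :=
  y_monotone e /\
  (forall r q L, e r -> e q -> snd r < L < snd q -> exists s, e s /\ snd s = L) /\
  (forall r s t, e r -> e s -> e t -> snd r < snd s < snd t -> btw (fst r) (fst s) (fst t)).

Lemma curve_good e : is_curve e -> good e.
Proof.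
  intros [[g [[Hc [Hi He]] _]] [_ [Hxm Hym]]].
  assert (Hge : forall t, 0 < t < 1 -> e (g t)) by (intros t Ht; apply He; eauto).
  assert (cx : cinj (fun t => fst (g t))).
  { split. intros t Ht; apply Hc; auto.
    intros s t Hs Ht E. apply Hi; auto. }
  assert (cy : cinj (fun t => snd (g t))).
  { split. intros t Ht; apply Hc; auto.
    intros s t Hs Ht E. apply Hi; auto. }
  split; [auto|split].
  - intros r q L Hr Hq HL.
    apply He in Hr as [tr [Htr Er]]. apply He in Hq as [tq [Htq Eq]]. subst.
    assert (tr <> tq) by (intro; subst; lra).
    destruct (Rlt_or_le tr tq).
    + destruct (ivt_gen (fun t => snd (g t)) tr tq L) as [t [Ht Et]]; auto.
      intros; apply Hc; lra.
      exists (g t); split; auto. apply Hge; lra.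
    + destruct (ivt_gen (fun t => snd (g t)) tq tr L) as [t [Ht Et]]; try lra.
      intros; apply Hc; lra.
      exists (g t); split; auto. apply Hge; lra.
  - intros r s t Hr Hs Ht HY.
    apply He in Hr as [tr [Htr Er]]. apply He in Hs as [ts [Hts Es]].
    apply He in Ht as [tt [Htt Et]]. subst.
    apply (btw_vals (fun t => fst (g t))); auto.
    apply (btw_param (fun t => snd (g t))); auto. left; auto.
Qed.

Lemma dist_lb a e d q : dist_is a e d -> 0 <= d -> e q ->
  d^2 <= (fst a - fst q)^2 + (snd a - snd q)^2.
Proof.
  intros [H1 _] Hd Hq. specialize (H1 q Hq). unfold edist in H1.
  set (X := (fst a - fst q)^2 + (snd a - snd q)^2) in *.
  assert (0 <= X) by (unfold X; apply Rplus_le_le_0_compat; apply pow2_ge_0).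
  pose proof (sqrt_sqrt X H). pose proof (sqrt_pos X).
  assert (d * d <= sqrt X * sqrt X) by (apply Rmult_le_compat; lra).
  simpl; lra.
Qed.

Lemma dist_ub a e d D2 : dist_is a e d -> 0 <= d -> 0 < D2 ->
  (forall q, e q -> D2 <= (fst a - fst q)^2 + (snd a - snd q)^2) -> D2 <= d^2.
Proof.
  intros [_ H2] Hd HD H.
  assert (sqrt D2 <= d).
  { apply H2. intros q Hq. unfold edist. apply sqrt_le_1_alt. auto. }
  pose proof (sqrt_sqrt D2 ltac:(lra)). pose proof (sqrt_pos D2).
  assert (sqrt D2 * sqrt D2 <= d * d) by (apply Rmult_le_compat; lra).
  simpl; lra.
Qed.

Lemma btw_sq a b c : btw a b c -> (c - b)^2 < (c - a)^2.
Proof. intros [H|H]; nra. Qed.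

Lemma btw_sq2 a b c : btw a b c -> (b - a)^2 + (c - b)^2 <= (c - a)^2.
Proof. intros [H|H]; nra. Qed.

Lemma coreV e d c u w : good e -> 0 < d -> u < w ->
  offset_minus e d (c,u) -> offset_minus e d (c,w) -> False.
Proof.
  intros [Hym [Hcr Hbt]] Hd Huw [[_ Hb1] Hd1] [[[q [Hq Hqx]] Hb2] Hd2]. simpl in *.
  pose proof (Hb1 q Hq Hqx). pose proof (Hb2 q Hq Hqx).
  assert (LB2 : forall r, e r -> d^2 <= (c - fst r)^2 + (w - snd r)^2).
  { intros r Hr. apply (dist_lb (c,w) e d r Hd2); auto; lra. }
  assert (Hhi : forall r, e r -> w <= snd r ->
            d^2 + (w-u)^2 <= (c - fst r)^2 + (u - snd r)^2).
  { intros r Hr Hw. pose proof (LB2 r Hr). nra. }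
  set (m := (u + w) / 2).
  destruct (classic (exists r0, e r0 /\ snd r0 < w)) as [[r0 [Hr0 Hr0w]]|Hno].
  2:{ assert (d^2 + (w-u)^2 <= d^2).
      { apply (dist_ub (c,u) e d); auto; try lra. nra.
        intros r Hr. simpl. apply Hhi; auto.
        destruct (Rlt_or_le (snd r) w); auto. exfalso; apply Hno; eauto. }
      nra. }
  destruct (Hcr r0 q w Hr0 Hq ltac:(lra)) as [s [Hs Hsy]].
  assert (Hsd : d^2 <= (c - fst s)^2) by (pose proof (LB2 s Hs); rewrite Hsy in H1; nra).
  assert (Hmid : forall r, e r -> m <= snd r <= w ->
            d^2 + (w-u)^2/4 <= (c - fst r)^2 + (u - snd r)^2).
  { intros r Hr Hm. destruct (Req_dec (snd r) w).
    - assert (r = s) by (apply Hym; auto; congruence). subst r.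
      rewrite Hsy. nra.
    - assert (btw (fst r) (fst s) (fst q)) by (apply Hbt; auto; lra).
      rewrite Hqx in H2. apply btw_sq in H2. unfold m in Hm. nra. }
  destruct (classic (exists r1, e r1 /\ snd r1 < m)) as [[r1 [Hr1 Hr1m]]|Hno].
  2:{ assert (d^2 + (w-u)^2/4 <= d^2).
      { apply (dist_ub (c,u) e d); auto; try lra. nra.
        intros r Hr. simpl.
        destruct (Rlt_or_le (snd r) m). exfalso; apply Hno; eauto.
        destruct (Rle_or_lt (snd r) w). apply Hmid; auto; lra.
        pose proof (Hhi r Hr ltac:(lra)). nra. }
      nra. }
  destruct (Hcr r1 q m Hr1 Hq ltac:(unfold m in *; lra)) as [z [Hz Hzy]].
  assert (Hzs : btw (fst z) (fst s) (fst q)) by (apply Hbt; auto; unfold m in *; lra).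
  rewrite Hqx in Hzs. apply btw_sq in Hzs.
  set (D2 := Rmin ((c - fst z)^2) (d^2 + (w-u)^2/4)).
  assert (d^2 < D2) by (apply Rmin_glb_lt; nra).
  assert (D2 <= d^2).
  { apply (dist_ub (c,u) e d); auto; try lra. nra.
    intros r Hr. simpl.
    pose proof (Rmin_l ((c - fst z)^2) (d^2 + (w-u)^2/4)) as M1.
    pose proof (Rmin_r ((c - fst z)^2) (d^2 + (w-u)^2/4)) as M2. fold D2 in M1, M2.
    destruct (Rlt_or_le (snd r) m).
    - assert (Hb : btw (fst r) (fst z) (fst q)) by (apply Hbt; auto; unfold m in *; lra).
      rewrite Hqx in Hb. apply btw_sq in Hb. pose proof (pow2_ge_0 (u - snd r)). lra.
    - destruct (Rle_or_lt (snd r) w). pose proof (Hmid r Hr ltac:(lra)). lra.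
      pose proof (Hhi r Hr ltac:(lra)). nra. }
  lra.
Qed.

Lemma coreH' e d c u w q q' : good e -> 0 < d ->
  offset_minus e d (u,c) -> offset_minus e d (w,c) ->
  e q -> fst q = u -> e q' -> fst q' = w -> u <> w -> snd q < snd q' -> False.
Proof.
  intros [Hym [Hcr Hbt]] Hd [[_ Hb1] Hd1] [[_ Hb2] Hd2] Hq Hqx Hq' Hqx' Huw Hqq.
  simpl in *.
  pose proof (Hb1 q Hq Hqx). pose proof (Hb2 q' Hq' Hqx').
  assert (LB1 : forall r, e r -> d^2 <= (u - fst r)^2 + (c - snd r)^2).
  { intros r Hr. apply (dist_lb (u,c) e d r Hd1); auto; lra. }
  assert (Hqd : d <= snd q - c).
  { pose proof (LB1 q Hq). rewrite Hqx in H1. nra. }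
  set (m := (snd q + snd q') / 2).
  destruct (Hcr q q' m Hq Hq' ltac:(unfold m; lra)) as [z [Hz Hzy]].
  assert (Hbz : btw (fst q) (fst z) (fst q')) by (apply Hbt; auto; unfold m in *; lra).
  rewrite Hqx, Hqx' in Hbz.
  assert (Hzw : (w - fst z)^2 > 0) by (destruct Hbz; nra).
  assert (Hwu : (w - u)^2 > 0) by (destruct (Rlt_or_le u w); nra).
  set (D2 := Rmin (Rmin (d^2 + (w-u)^2) ((w - fst z)^2 + d^2)) ((m - c)^2)).
  assert (d^2 < D2).
  { apply Rmin_glb_lt. apply Rmin_glb_lt; lra. unfold m. nra. }
  assert (D2 <= d^2).
  { apply (dist_ub (w,c) e d); auto; try lra. nra.
    intros r Hr. simpl.
    pose proof (Rmin_l (Rmin (d^2 + (w-u)^2) ((w - fst z)^2 + d^2)) ((m - c)^2)) as M1.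
    pose proof (Rmin_r (Rmin (d^2 + (w-u)^2) ((w - fst z)^2 + d^2)) ((m - c)^2)) as M2.
    pose proof (Rmin_l (d^2 + (w-u)^2) ((w - fst z)^2 + d^2)) as M3.
    pose proof (Rmin_r (d^2 + (w-u)^2) ((w - fst z)^2 + d^2)) as M4.
    fold D2 in M1, M2.
    pose proof (LB1 r Hr) as L1.
    destruct (Rtotal_order (snd r) (snd q)) as [E|[E|E]].
    - assert (Hb : btw (fst r) (fst q) (fst q')) by (apply Hbt; auto; lra).
      rewrite Hqx, Hqx' in Hb. apply btw_sq2 in Hb. lra.
    - assert (r = q) by (apply Hym; auto). subst r. rewrite Hqx.
      pose proof (LB1 q Hq) as L2. rewrite Hqx in L2. nra.
    - destruct (Rlt_or_le (snd r) m).
      + assert (Hb : btw (fst r) (fst z) (fst q')) by (apply Hbt; auto; unfold m in *; lra).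
        rewrite Hqx' in Hb. apply btw_sq in Hb.
        assert (d^2 <= (c - snd r)^2) by nra. lra.
      + assert ((m - c)^2 <= (c - snd r)^2) by (unfold m in *; nra).
        pose proof (pow2_ge_0 (w - fst r)). lra. }
  lra.
Qed.

Lemma coreH e d c u w : good e -> 0 < d -> u <> w ->
  offset_minus e d (u,c) -> offset_minus e d (w,c) -> False.
Proof.
  intros G Hd Huw H1 H2.
  pose proof H1 as [[[q [Hq Hqx]] _] _]. pose proof H2 as [[[q' [Hq' Hqx']] _] _].
  simpl in *.
  destruct (Rtotal_order (snd q) (snd q')) as [E|[E|E]].
  - eapply (coreH' e d c u w q q'); eauto.
  - destruct G as [Hym _]. assert (q = q') by (apply Hym; auto). subst. congruence.
  - eapply (coreH' e d c w u q' q); eauto.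
Qed.

Definition refly (e : pset) : pset := fun a => e (fst a, - snd a).

Lemma good_refly e : good e -> good (refly e).
Proof.
  intros [Hym [Hcr Hbt]]. unfold refly. split; [|split].
  - intros [a1 a2] [b1 b2] Ha Hb E. simpl in *.
    assert ((a1, -a2) = (b1, -b2)) by (apply Hym; simpl; auto; lra).
    injection H; intros; f_equal; lra.
  - intros r q L Hr Hq HL.
    destruct (Hcr (fst q, - snd q) (fst r, - snd r) (- L) Hq Hr ltac:(simpl; lra))
      as [s [Hs Hsy]].
    exists (fst s, - snd s). simpl. rewrite Ropp_involutive, <- surjective_pairing.
    split; auto; lra.
  - intros r s t Hr Hs Ht HY.
    pose proof (Hbt _ _ _ Ht Hs Hr ltac:(simpl; lra)). simpl in H.
    unfold btw in *; lra.
Qed.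

Lemma edist_refl x y q : edist (x, - y) q = edist (x, y) (fst q, - snd q).
Proof. unfold edist; simpl. f_equal. ring. Qed.

Lemma plus_minus e d x y : offset_plus e d (x,y) -> offset_minus (refly e) d (x, - y).
Proof.
  intros [[[q [Hq Hqx]] Hall] [H1 H2]]. unfold refly. split; [split|split].
  - exists (fst q, - snd q). simpl. rewrite Ropp_involutive, <- surjective_pairing. auto.
  - intros q' Hq' Hx. simpl in *. pose proof (Hall _ Hq' Hx). simpl in H. lra.
  - intros q' Hq'. rewrite edist_refl. apply H1; auto.
  - intros d' Hd'. apply H2. intros q' Hq'.
    specialize (Hd' (fst q', - snd q')). simpl in Hd'.
    rewrite Ropp_involutive, <- surjective_pairing in Hd'.
    rewrite edist_refl in Hd'. simpl in Hd'. rewrite Ropp_involutive, <- surjective_pairing in Hd'.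
    auto.
Qed.

Lemma uniq_mono (S : pset) :
  (forall c u w, S (c,u) -> S (c,w) -> u = w) ->
  (forall c u w, S (u,c) -> S (w,c) -> u = w) -> monotone_set S.
Proof.
  intros HV HH. split.
  - intros c u v w Hu Hw Hv. pose proof (HV c u w Hu Hw). subst. 
    replace v with w by lra. auto.
  - intros c u v w Hu Hw Hv. pose proof (HH c u w Hu Hw). subst.
    replace v with w by lra. auto.
Qed.

Theorem lemma9 (e : pset) (delta : R) :
  is_curve e -> 0 < delta ->
  monotone_set (offset_minus e delta) /\ monotone_set (offset_plus e delta).
Proof.
  intros Hc Hd. pose proof (curve_good e Hc) as G.
  pose proof (good_refly e G) as G'.
  split; apply uniq_mono.
  - intros c u w Hu Hw. destruct (Rtotal_order u w) as [E|[E|E]]; auto.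
    exfalso; apply (coreV e delta c u w); auto. exfalso; apply (coreV e delta c w u); auto.
  - intros c u w Hu Hw. destruct (Req_dec u w); auto. exfalso; apply (coreH e delta c u w); auto.
  - intros c u w Hu Hw. apply plus_minus in Hu, Hw.
    destruct (Rtotal_order (-u) (-w)) as [E|[E|E]]; try lra.
    exfalso; apply (coreV (refly e) delta c (-u) (-w)); auto.
    exfalso; apply (coreV (refly e) delta c (-w) (-u)); auto.
  - intros c u w Hu Hw. apply plus_minus in Hu, Hw.
    destruct (Req_dec u w); auto. exfalso; apply (coreH (refly e) delta (-c) u w); auto.
Qed.
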